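(* Let $m(\omega)$ be a positive-integer-valued random variable, and let $j_\omega=\min\{n\in\mathbb N: m(\theta^{-n}\omega)\le n\}$. Then for every integer $k\ge0$, $\mathbb P(j_\omega>k)\le\mathbb P(m(\omega)>k)$.
   Context: $(\Omega,\mathcal F,\mathbb P,\theta)$ is the shift system of a stationary sequence indexed by $\mathbb Z$; in particular $\theta$ is invertible and preserves $\mathbb P$. ($j_\omega$ is a.s. finite; $\{j_\omega>k\}$ is understood with $j_\omega=\infty$ if no such $n$ exists.) *)

(* Defs.v *)
From HB Require Import structures.
From mathcomp Require Import all_boot all_order all_algebra.
From mathcomp Require Import all_classical all_reals all_analysis.
Set Implicit Arguments. Unset Strict Implicit. Unset Printing Implicit Defensive.
Import Order.TTheory GRing.Theory Num.Theory.
Local Open Scope classical_set_scope.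

(* j_omega = min { n in N : m (theta^{-n} omega) <= n }, with j_omega = oo if
   no such n exists.  Hence j_omega > k  iff  for every n <= k,
   m (theta^{-n} omega) > n.  [j_gt m thinv k] is the event {j_omega > k},
   where thinv is the inverse shift theta^{-1}. *)
Definition j_gt (T : Type) (m : T -> nat) (thinv : T -> T) (k : nat) : set T :=
  [set w | forall n : nat, (n <= k)%N -> (n < m (iter n thinv w))%N].

(* Main.v *)
Require Import Defs.
From HB Require Import structures.
From mathcomp Require Import all_boot all_order all_algebra.
From mathcomp Require Import all_classical all_reals all_analysis.
Import Order.TTheory GRing.Theory Num.Theory.
Local Open Scope classical_set_scope.
Local Open Scope ereal_scope.

Theorem lemma5p2 (d : measure_display) (T : measurableType d) (R : realType)
  (P : probability T R) (theta thinv : T -> T)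
  (htheta_meas : measurable_fun setT theta)
  (hthinv_meas : measurable_fun setT thinv)
  (hK1 : cancel theta thinv) (hK2 : cancel thinv theta)
  (hpres : forall A : set T, measurable A -> P (theta @^-1` A) = P A)
  (m : T -> nat)
  (hm_meas : forall n : nat, measurable (m @^-1` [set n]))
  (hm_pos : forall w : T, (0 < m w)%N)
  (k : nat) :
  P (j_gt m thinv k) <= P [set w | (k < m w)%N].
Proof.
have step : forall A, measurable A ->
    measurable (thinv @^-1` A) /\ P (thinv @^-1` A) = P A.
  move=> A mA.
  have mB : measurable (thinv @^-1` A).
    by have := hthinv_meas measurableT A mA; rewrite setTI.
  split => //.
  rewrite -(hpres _ mB); congr (P _).
  by apply/funext => x /=; rewrite hK1.
have iterP : forall n A, measurable A ->
    measurable ((iter n thinv) @^-1` A) /\ P ((iter n thinv) @^-1` A) = P A.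
  elim=> [|n IH] A mA /=; first by [].
  have [mB PB] := step A mA.
  have [mC PC] := IH _ mB.
  have -> : (fun x => thinv (iter n thinv x)) @^-1` A
      = (iter n thinv) @^-1` (thinv @^-1` A) by [].
  by split => //; rewrite PC PB.
have mgt : forall n, measurable [set w | (n < m w)%N].
  move=> n.
  have -> : [set w | (n < m w)%N] =
      ~` \bigcup_(i in [set i | (i <= n)%N]) (m @^-1` [set i]).
    apply/funext => w /=; apply/propext; split.
      move=> h [i /= hi hw]; move: hi; rewrite -hw leqNgt h.
      by [].
    move=> h; rewrite ltnNge; apply/negP => hle; apply: h.
    by exists (m w).
  apply: measurableC; apply: bigcup_measurable => i _; exact: hm_meas.
have [mk Pk] := iterP k _ (mgt k).
rewrite -Pk.
apply: le_measure; rewrite ?inE //.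
- have -> : j_gt m thinv k =
      \bigcap_(n in [set n | (n <= k)%N]) ((iter n thinv) @^-1` [set w | (n < m w)%N]).
    apply/funext => w /=; apply/propext; split.
      by move=> h n /= hn; apply: h.
    by move=> h n hn; apply: (h n).
  apply: bigcap_measurable; last by move=> n _; exact: (iterP n _ (mgt n)).1.
  by exists 0%N.
- by move=> w /= h; apply: h.
Qed.
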